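(* Given a requirement with an $\mathbf{exist}$ $count\_exp$ operation, the minimal counting information of a node $u$ in the DVNet is $\min(\mathbf{c}_u)$ if $count\_exp$ is $\geq N$ or $> N$; it is $\max(\mathbf{c}_u)$ if $count\_exp$ is $\leq N$ or $< N$; and it is the first $\min(|\mathbf{c}_u|, 2)$ smallest elements in $\mathbf{c}_u$ if $count\_exp$ is $== N$.
   Context: A DVNet is a directed acyclic graph, obtained by multiplying the finite automaton of a regular expression $path\_exp$ (over device identifiers) with the network topology, that compactly represents all paths in the network matching $path\_exp$; each DVNet node $u$ corresponds to a device $u.dev$. For a packet $p$, each node $u$ computes a set $\mathbf{c}_u$ of non-negative integers: the distinct numbers, across $p$'s universes (possible sets of packet traces due to ANY-type forwarding actions), of copies of $p$ that can be delivered from $u$ to the destination node along DVNet paths by the network data plane. A destination node has count set $\{1\}$. If $u.dev$ forwards $p$ with an ALL-type action (copy to every next-hop in the group), $\mathbf{c}_u$ is the cross-product sum $\{a+b \mid a\in\mathbf{c}_1, b\in\mathbf{c}_2\}$ (iterated) of the count sets of the downstream neighbors $v_j$ of $u$ whose devices are among the next-hops; if the action is ANY-type (one of the next-hops), $\mathbf{c}_u$ is the union of those sets, additionally including $0$ if $u.dev$ may forward $p$ to a device with no corresponding downstream DVNet node. A requirement with operator $\mathbf{exist}$ $count\_exp$ (where $count\_exp$ is one of $== N$, $\geq N$, $> N$, $\leq N$, $< N$) requires that in every universe the number of traces of $p$ matching $path\_exp$ satisfies $count\_exp$. The minimal counting information of $u$ is defined as the minimal set of elements of $\mathbf{c}_u$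 that $u.dev$ needs to send to the devices of $u$'s upstream neighbors so that the source node of the DVNet can correctly verify the requirement, assuming arbitrary data planes at devices. *)

(* Defs.v *)
From HB Require Import structures.
From mathcomp Require Import all_boot all_order.
From mathcomp Require Import finmap.

Set Implicit Arguments.
Unset Strict Implicit.
Unset Printing Implicit Defensive.

Local Open Scope fset_scope.

Notation countset := {fset nat}.

Inductive count_op := OpEq | OpGe | OpGt | OpLe | OpLt.

(** [sat op N k] : the number [k] of matching traces satisfies [count_exp]. *)
Definition sat (op : count_op) (N k : nat) : bool :=
  match op with
  | OpEq => k == N
  | OpGe => N <= k
  | OpGt => N < k
  | OpLe => k <= N
  | OpLt => k < N
  end.

(** Verification at the source node: the requirement [exist count_exp] holds
    iff in every universe (i.e. for every element of the source's count set)
    the number of matching traces satisfies [count_exp]. *)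
Definition verdict (op : count_op) (N : nat) (c : countset) : bool :=
  all (sat op N) (enum_fset c).

Definition sumset (A B : countset) : countset :=
  [fset (a + b)%N | a in A, b in B].

(** How the count set of node u propagates to the source node of the DVNet,
    under arbitrary data planes: the source's count set is an expression built
    from the count set of u ([Hole], possibly used several times since the DAG
    may contain several paths from the source to u), count sets of other nodes
    ([Const]), unions (ANY-type actions, including the extra 0) and
    cross-product sums (ALL-type actions). *)
Inductive context :=
  | Hole
  | Const of countset
  | CUnion of context & context
  | CSum of context & context.

Fixpoint eval_ctx (e : context) (X : countset) : countset :=
  match e with
  | Hole => X
  | Const A => A
  | CUnion e1 e2 => eval_ctx e1 X `|` eval_ctx e2 X
  | CSum e1 e2 => sumset (eval_ctx e1 X) (eval_ctx e2 X)
  end.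

(** [S] is sufficient counting information for the count set [c] of u: it is a
    set of elements of [c], and replacing [c] by [S] never changes the verdict
    computed at the source, whatever the rest of the data plane and whatever
    the threshold [N]. *)
Definition sufficient_info (op : count_op) (c S : countset) : Prop :=
  S `<=` c /\
  forall (N : nat) (e : context), verdict op N (eval_ctx e S) = verdict op N (eval_ctx e c).

Definition minimal_info (op : count_op) (c S : countset) : Prop :=
  sufficient_info op c S /\
  forall S' : countset, sufficient_info op c S' -> #|` S| <= #|` S'|.

Definition smallest (k : nat) (c : countset) : countset :=
  [fset x | x in take k (sort leq (enum_fset c))].
Definition largest (k : nat) (c : countset) : countset :=
  [fset x | x in take k (sort geq (enum_fset c))].

Definition claimed_info (op : count_op) (c : countset) : countset :=
  match op with
  | OpGe | OpGt => smallest 1 c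
  | OpLe | OpLt => largest 1 c
  | OpEq => smallest (minn #|` c| 2) c
  end.

(* Main.v *)
Require Import Defs.
From HB Require Import structures.
From mathcomp Require Import all_boot all_order.
From mathcomp Require Import finmap.
From mathcomp Require Import zify.

Local Open Scope fset_scope.
Local Open Scope nat_scope.

Lemma mem_sumset (A B : {fset nat}) z :
  z \in sumset A B <-> exists a b, [/\ a \in A, b \in B & z = a + b].
Proof.
split.
  by move=> /imfset2P [a Ha [b Hb ->]]; exists a, b.
by move=> [a [b [Ha Hb ->]]]; apply/imfset2P; exists a => //; exists b.
Qed.

Lemma ctx_ind (R : {fset nat} -> {fset nat} -> Prop) :
  (forall A, R A A) ->
  (forall A A' B B', R A A' -> R B B' -> R (A `|` B) (A' `|` B')) ->
  (forall A A' B B', R A A' -> R B B' -> R (sumset A B) (sumset A' B')) ->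
  forall e X Y, R X Y -> R (eval_ctx e X) (eval_ctx e Y).
Proof.
move=> Hr HU HS; elim=> [|A|e1 IH1 e2 IH2|e1 IH1 e2 IH2] X Y HXY //=.
  by apply: HU; [apply: IH1|apply: IH2].
by apply: HS; [apply: IH1|apply: IH2].
Qed.

Lemma verdictP op N X :
  reflect (forall x, x \in X -> sat op N x) (verdict op N X).
Proof. exact: allP. Qed.

Lemma iff_verdict op N X Y :
  ((forall x, x \in X -> sat op N x) <-> (forall x, x \in Y -> sat op N x)) ->
  verdict op N X = verdict op N Y.
Proof.
move=> [H1 H2]; apply/idP/idP => /verdictP H; apply/verdictP; auto.
Qed.

Lemma fset_min (A : {fset nat}) : A != fset0 ->
  exists2 x, x \in A & forall y, y \in A -> x <= y.
Proof.
move=> /fset0Pn ex.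
case: (ex_minnP ex) => m Hm Hmin; exists m => //.
Qed.

Lemma seq_max (s : seq nat) : s != [::] ->
  exists2 x, x \in s & forall y, y \in s -> y <= x.
Proof.
elim: s => [//|a t IH] _.
case: t IH => [|b t] IH.
  by exists a; rewrite ?inE // => y; rewrite inE => /eqP ->.
have [x Hx Hmax] := IH isT.
exists (maxn a x).
  by rewrite /maxn; case: ifP => _; rewrite inE ?eqxx ?Hx ?orbT.
move=> y; rewrite inE => /orP [/eqP ->|/Hmax]; lia.
Qed.

Lemma fset_max (A : {fset nat}) : A != fset0 ->
  exists2 x, x \in A & forall y, y \in A -> y <= x.
Proof.
move=> /fset0Pn [a Ha].
have Ha' : a \in enum_fset A := Ha.
have : enum_fset A != [::] by move: Ha'; case: (enum_fset A).
by move=> /seq_max.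
Qed.

Lemma sumset_eq0 (A B : {fset nat}) :
  (sumset A B == fset0) = (A == fset0) || (B == fset0).
Proof.
apply/idP/idP.
  move=> H; apply/negPn/negP; rewrite negb_or => /andP [HA HB].
  move/fset0Pn: HA => [a Ha]; move/fset0Pn: HB => [b Hb].
  have : a + b \in sumset A B by apply/mem_sumset; exists a, b.
  by rewrite (eqP H) in_fset0.
move=> H; apply/negPn/negP => /fset0Pn [z /mem_sumset [a [b [Ha Hb _]]]].
by case/orP: H => /eqP E; rewrite E in_fset0 in Ha Hb.
Qed.

Definition lb (X : {fset nat}) m := forall x, x \in X -> m <= x.
Definition ub (X : {fset nat}) m := forall x, x \in X -> x <= m.

Definition RL X Y := (X == fset0) = (Y == fset0) /\ forall m, lb X m <-> lb Y m.
Definition RU X Y := (X == fset0) = (Y == fset0) /\ forall m, ub X m <-> ub Y m.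

Lemma lbU A B m : lb (A `|` B) m <-> lb A m /\ lb B m.
Proof.
split; first by move=> H; split=> x Hx; apply: H; rewrite in_fsetU Hx ?orbT.
by move=> [H1 H2] x; rewrite in_fsetU => /orP [/H1|/H2].
Qed.

Lemma ubU A B m : ub (A `|` B) m <-> ub A m /\ ub B m.
Proof.
split; first by move=> H; split=> x Hx; apply: H; rewrite in_fsetU Hx ?orbT.
by move=> [H1 H2] x; rewrite in_fsetU => /orP [/H1|/H2].
Qed.

Lemma lbS A B m : lb (sumset A B) m <->
  ((A == fset0) || (B == fset0)) \/ exists p q, [/\ m <= p + q, lb A p & lb B q].
Proof.
split.
  case: (boolP ((A == fset0) || (B == fset0))) => [|H0] H; first by left.
  right; move: H0; rewrite negb_or => /andP [HA HB].
  move/fset_min: HA => [p Hp Hpm]; move/fset_min: HB => [q Hq Hqm].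
  exists p, q; split => //; apply: H; apply/mem_sumset; by exists p, q.
case=> [H0|[p [q [Hm Hp Hq]]]] z /mem_sumset [a [b [Ha Hb ->]]].
  by case/orP: H0 => /eqP E; rewrite E in_fset0 in Ha Hb.
have := Hp a Ha; have := Hq b Hb; lia.
Qed.

Lemma ubS A B m : ub (sumset A B) m <->
  ((A == fset0) || (B == fset0)) \/ exists p q, [/\ p + q <= m, ub A p & ub B q].
Proof.
split.
  case: (boolP ((A == fset0) || (B == fset0))) => [|H0] H; first by left.
  right; move: H0; rewrite negb_or => /andP [HA HB].
  move/fset_max: HA => [p Hp Hpm]; move/fset_max: HB => [q Hq Hqm].
  exists p, q; split => //; apply: H; apply/mem_sumset; by exists p, q.
case=> [H0|[p [q [Hm Hp Hq]]]] z /mem_sumset [a [b [Ha Hb ->]]].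
  by case/orP: H0 => /eqP E; rewrite E in_fset0 in Ha Hb.
have := Hp a Ha; have := Hq b Hb; lia.
Qed.

Lemma RL_ctx e X Y : RL X Y -> RL (eval_ctx e X) (eval_ctx e Y).
Proof.
apply: ctx_ind.
- by move=> A; split.
- move=> A A' B B' [EA HA] [EB HB]; split; first by rewrite !fsetU_eq0 EA EB.
  move=> m; rewrite !lbU; split => [] [/HA ? /HB ?]; by [].
- move=> A A' B B' [EA HA] [EB HB]; split; first by rewrite !sumset_eq0 EA EB.
  move=> m; rewrite !lbS EA EB; split=> [] [?|[p [q [? /HA ? /HB ?]]]]; auto;
  right; by exists p, q.
Qed.

Lemma RU_ctx e X Y : RU X Y -> RU (eval_ctx e X) (eval_ctx e Y).
Proof.
apply: ctx_ind.
- by move=> A; split.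
- move=> A A' B B' [EA HA] [EB HB]; split; first by rewrite !fsetU_eq0 EA EB.
  move=> m; rewrite !ubU; split => [] [/HA ? /HB ?]; by [].
- move=> A A' B B' [EA HA] [EB HB]; split; first by rewrite !sumset_eq0 EA EB.
  move=> m; rewrite !ubS EA EB; split=> [] [?|[p [q [? /HA ? /HB ?]]]]; auto;
  right; by exists p, q.
Qed.

Definition sub1 (X : {fset nat}) N := forall x, x \in X -> x = N.
Definition RE X Y := forall N, sub1 X N <-> sub1 Y N.

Lemma sub1U A B N : sub1 (A `|` B) N <-> sub1 A N /\ sub1 B N.
Proof.
split; first by move=> H; split=> x Hx; apply: H; rewrite in_fsetU Hx ?orbT.
by move=> [H1 H2] x; rewrite in_fsetU => /orP [/H1|/H2].
Qed.

Lemma sub1_empty A : A == fset0 <-> sub1 A 0 /\ sub1 A 1.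
Proof.
split.
  by move/eqP => ->; split=> x; rewrite in_fset0.
move=> [H0 H1]; apply/negPn/negP => /fset0Pn [x Hx].
by have := H0 x Hx; have := H1 x Hx => ->.
Qed.

Lemma sub1S A B N : sub1 (sumset A B) N <->
  (sub1 A 0 /\ sub1 A 1) \/ (sub1 B 0 /\ sub1 B 1) \/
  exists a b, [/\ a + b = N, sub1 A a & sub1 B b].
Proof.
split.
  move=> H.
  case: (boolP (A == fset0)) => [/sub1_empty|]; first by left.
  case: (boolP (B == fset0)) => [/sub1_empty|]; first by right; left.
  move=> /fset0Pn [b0 Hb0] /fset0Pn [a0 Ha0].
  have E : a0 + b0 = N by apply: H; apply/mem_sumset; exists a0, b0.
  right; right; exists a0, b0; split => // x Hx.
    have : x + b0 = N by apply: H; apply/mem_sumset; exists x, b0.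
    lia.
  have : a0 + x = N by apply: H; apply/mem_sumset; exists a0, x.
  lia.
case=> [/sub1_empty/eqP E|[/sub1_empty/eqP E|[a [b [<- Ha Hb]]]]] z
   /mem_sumset [x [y [Hx Hy ->]]].
- by rewrite E in_fset0 in Hx.
- by rewrite E in_fset0 in Hy.
- by rewrite (Ha x Hx) (Hb y Hy).
Qed.

Lemma RE_ctx e X Y : RE X Y -> RE (eval_ctx e X) (eval_ctx e Y).
Proof.
apply: ctx_ind.
- by move=> A.
- move=> A A' B B' HA HB N; rewrite !sub1U; split => [] [/HA ? /HB ?]; by [].
- move=> A A' B B' HA HB N; rewrite !sub1S.
  split=> [] [[/HA ? /HA ?]|[[/HB ? /HB ?]|[a [b [? /HA ? /HB ?]]]]]; auto;
  right; right; by exists a, b.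
Qed.

Lemma sub1_card X N : sub1 X N -> #|` X| <= 1.
Proof.
move=> H; rewrite -(cardfs1 N); apply: fsubset_leq_card.
by apply/fsubsetP => x /H ->; rewrite in_fset1.
Qed.

Lemma card_take_sort (r : rel nat) k (c : {fset nat}) :
  #|` [fset x | x in take k (sort r (enum_fset c))]| = minn k #|` c|.
Proof.
rewrite card_imfset //=.
have U : uniq (take k (sort r (enum_fset c))) by rewrite take_uniq // sort_uniq fset_uniq.
by rewrite undup_id // size_take_min size_sort.
Qed.

Lemma sub_take_sort (r : rel nat) k (c : {fset nat}) :
  [fset x | x in take k (sort r (enum_fset c))] `<=` c.
Proof.
apply/fsubsetP => x /imfsetP [y /= /mem_take Hy ->].
by rewrite mem_sort in Hy.
Qed.

Lemma head_sort (r : rel nat) (c : {fset nat}) :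
  total r -> transitive r -> c != fset0 ->
  exists x, [/\ x \in c, (forall y, y \in c -> r x y) &
    (forall y, y \in [fset z | z in take 1 (sort r (enum_fset c))] <-> y = x)].
Proof.
move=> Ht Htr /fset0Pn [a Ha].
have : sorted r (sort r (enum_fset c)) by apply: sort_sorted.
have Hm := mem_sort r (enum_fset c).
case E : (sort r (enum_fset c)) Hm => [|x t] Hm.
  by have := Hm a; rewrite in_nil Ha.
move=> /= Hp; exists x; split.
- by rewrite -Hm inE eqxx.
- move=> y; rewrite -Hm inE => /orP [/eqP ->|Hy].
    by have := Ht x x; rewrite orbb.
  by have := order_path_min Htr Hp => /allP; apply.
- move=> y; split.
    move=> /imfsetP [z /=]; rewrite take0 inE => /eqP -> -> //.
  by move=> ->; apply/imfsetP; exists x; rewrite //= take0 inE.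
Qed.

Lemma geq_total : total geq.
Proof. by move=> a b; rewrite /geq /= orbC leq_total. Qed.
Lemma geq_trans : transitive geq.
Proof. by move=> b a d /= h1 h2; apply: leq_trans h2 h1. Qed.

Lemma nonempty_of_suff op c S : c != fset0 -> sufficient_info op c S -> S != fset0.
Proof.
move=> /fset0Pn [x Hx] [_ H]; apply/negP => /eqP E.
pose N := match op with OpGe | OpGt => x + 2 | _ => 0 end.
have := H N (CSum Hole (Const [fset 1])); rewrite E /=.
have -> : verdict op N (sumset fset0 [fset 1]) = true.
  by apply/verdictP => z /mem_sumset [a [b [Ha _ _]]]; rewrite in_fset0 in Ha.
move/esym/verdictP => /(_ (x + 1)).
have Hin : x + 1 \in sumset c [fset 1] by apply/mem_sumset; exists x, 1; rewrite fset11.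
move=> /(_ Hin); rewrite /N; clear H N; case: op => /=; lia.
Qed.

Theorem proposition1 (op : count_op) (c : {fset nat}) :
  c != fset0 -> minimal_info op c (claimed_info op c).
Proof.
move=> Hc.
have Hc1 : 0 < #|` c| by rewrite cardfs_gt0.
have lb1 : forall S', sufficient_info op c S' -> 1 <= #|` S'|.
  by move=> S' HS; rewrite cardfs_gt0; apply: nonempty_of_suff HS.
case: op lb1 => lb1.
-
  set S := claimed_info OpEq c.
  have HSc : S `<=` c by apply: sub_take_sort.
  have cardS : #|` S| = minn #|` c| 2.
    by rewrite /S /= card_take_sort minnAC minnn.
  have vE : forall N X, verdict OpEq N X = true <-> sub1 X N.
    move=> N X; split => [/verdictP H x /H /eqP //|H].
    by apply/verdictP => x /H /= ->.
  have HRE : RE S c.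
    case: (leqP #|` c| 2) => Hle.
      have -> : S = c.
        by apply/eqP; rewrite eqEfcard HSc cardS; lia.
      by [].
    move=> N; split => /sub1_card; lia.
  split.
    split => // N e; apply/idP/idP => /vE H; apply/vE; have := RE_ctx e _ _ HRE N; tauto.
  move=> S' HS'; rewrite cardS.
  have := lb1 S' HS'.
  case: (leqP #|` c| 1) => Hle; first lia.
  move=> _.
  have [x Hx] : exists x, x \in S' by apply/fset0Pn; rewrite -cardfs_gt0 lb1.
  case: (boolP (S' `<=` [fset x])) => Hsub.
    have : sub1 S' x by move=> y /(fsubsetP Hsub); rewrite in_fset1 => /eqP.
    move=> /vE; case: HS' => _ /(_ x Hole) /= -> /vE /sub1_card; lia.
  move: Hsub => /fsubsetPn [y Hy]; rewrite in_fset1 => Hxy.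
  have : [fset x; y] `<=` S' by apply/fsubsetP => z; rewrite in_fset2 => /orP [/eqP ->|/eqP ->].
  move=> /fsubset_leq_card; rewrite cardfs2 eq_sym Hxy; lia.
-
  have [x [Hx Hmin HS]] := head_sort leq c leq_total leq_trans Hc.
  have HR : RL (claimed_info OpGe c) c.
    split.
      apply/idP/idP => /eqP E.
        have Hx' : x \in claimed_info OpGe c := proj2 (HS x) erefl.
        by rewrite E in_fset0 in Hx'.
      by rewrite E in_fset0 in Hx.
    move=> m; split => H y.
      move=> Hy; apply: leq_trans (Hmin y Hy); apply: H; exact/HS.
    by move=> /HS ->; apply: H.
  split.
    split; first exact: sub_take_sort.
    move=> N e; have [_ H] := RL_ctx e _ _ HR; apply: iff_verdict; exact: H.
  move=> S' HS'; rewrite card_take_sort; have := lb1 S' HS'; lia.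
-
  have [x [Hx Hmin HS]] := head_sort leq c leq_total leq_trans Hc.
  have HR : RL (claimed_info OpGt c) c.
    split.
      apply/idP/idP => /eqP E.
        have Hx' : x \in claimed_info OpGt c := proj2 (HS x) erefl.
        by rewrite E in_fset0 in Hx'.
      by rewrite E in_fset0 in Hx.
    move=> m; split => H y.
      move=> Hy; apply: leq_trans (Hmin y Hy); apply: H; exact/HS.
    by move=> /HS ->; apply: H.
  split.
    split; first exact: sub_take_sort.
    move=> N e; have [_ H] := RL_ctx e _ _ HR; apply: iff_verdict; exact: (H N.+1).
  move=> S' HS'; rewrite card_take_sort; have := lb1 S' HS'; lia.
-
  have [x [Hx Hmax HS]] := head_sort geq c geq_total geq_trans Hc.
  have HR : RU (claimed_info OpLe c) c.
    split.
      apply/idP/idP => /eqP E.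
        have Hx' : x \in claimed_info OpLe c := proj2 (HS x) erefl.
        by rewrite E in_fset0 in Hx'.
      by rewrite E in_fset0 in Hx.
    move=> m; split => H y.
      move=> Hy; apply: leq_trans (Hmax y Hy) _; apply: H; exact/HS.
    by move=> /HS ->; apply: H.
  split.
    split; first exact: sub_take_sort.
    move=> N e; have [_ H] := RU_ctx e _ _ HR; apply: iff_verdict; exact: H.
  move=> S' HS'; rewrite card_take_sort; have := lb1 S' HS'; lia.
-
  have [x [Hx Hmax HS]] := head_sort geq c geq_total geq_trans Hc.
  have HR : RU (claimed_info OpLt c) c.
    split.
      apply/idP/idP => /eqP E.
        have Hx' : x \in claimed_info OpLt c := proj2 (HS x) erefl.
        by rewrite E in_fset0 in Hx'.
      by rewrite E in_fset0 in Hx.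
    move=> m; split => H y.
      move=> Hy; apply: leq_trans (Hmax y Hy) _; apply: H; exact/HS.
    by move=> /HS ->; apply: H.
  split.
    split; first exact: sub_take_sort.
    move=> N e; have [E H] := RU_ctx e _ _ HR; apply: iff_verdict.
    case: N => [|N] /=.
      split => H0 y Hy; exfalso.
        move: E; case: (boolP (eval_ctx e (claimed_info OpLt c) == fset0)).
          by move=> _ /esym/eqP E'; rewrite E' in_fset0 in Hy.
        by move=> /fset0Pn [z /H0].
      move: E; case: (boolP (eval_ctx e c == fset0)).
        by move=> _ /eqP E'; rewrite E' in_fset0 in Hy.
      by move=> /fset0Pn [z /H0].
    exact: (H N).
  move=> S' HS'; rewrite card_take_sort; have := lb1 S' HS'; lia.
Qed.
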